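(* Let $X$ be a topological space, $D$ a countable set, and $\mathcal{I}\subseteq P(D)$ an ideal. Suppose that for every family $\{f_d\}_{d\in D}$ of pairwise distinct continuous real-valued functions on $X$ which $\mathcal{I}$-converges to $0$, there is $A\in\mathcal{I}^*$ such that $\{f_d\}_{d\in A}$ converges pointwise to $0$. Then $X$ has the $\mathcal{I}$-convergence property (i.e., the same conclusion holds for all families $\{f_d\}_{d\in D}$ of continuous real-valued functions, not necessarily distinct, which $\mathcal{I}$-converge to $0$).
   Context: An ideal $\mathcal{I}\subseteq P(D)$ contains all singletons and is closed under subsets and finite unions; $\mathcal{I}^*=\{D\setminus A:A\in\mathcal{I}\}$ is its dual filter. A family of reals $\{r_d\}_{d\in D}$ $\mathcal{I}$-converges to $0$ if for each $\epsilon>0$, $\{d\in D:|r_d|<\epsilon\}\in\mathcal{I}^*$. A family $\{f_d\}_{d\in D}$ of real-valued functions on $X$ $\mathcal{I}$-converges to $0$ if $\{f_d(x)\}_{d\in D}$ $\mathcal{I}$-converges to $0$ for each $x\in X$. For infinite $A\subseteq D$, $\{f_d\}_{d\in A}$ converges pointwise to $0$ means that for each $x$ and $\epsilon>0$, $|f_d(x)|\ge\epsilon$ for only finitely many $d\in A$. $X$ has the $\mathcal{I}$-convergence property if for every family $\{f_d\}_{d\in D}$ of continuous real-valued functions on $X$ which $\mathcal{I}$-converges to $0$ there is $A\in\mathcal{I}^*$ such that $\{f_d\}_{d\in A}$ converges pointwise to $0$. *)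

(* Defs.v *)
From Stdlib Require Import Reals List.
Open Scope R_scope.

Definition is_topology {X : Type} (opn : (X -> Prop) -> Prop) : Prop :=
  opn (fun _ => True) /\
  (forall U V, opn U -> opn V -> opn (fun x => U x /\ V x)) /\
  (forall (F : (X -> Prop) -> Prop),
     (forall U, F U -> opn U) -> opn (fun x => exists U, F U /\ U x)).

Definition R_open (U : R -> Prop) : Prop :=
  forall y, U y -> exists eps, eps > 0 /\ forall z, Rabs (z - y) < eps -> U z.

Definition continuous_on {X : Type} (opn : (X -> Prop) -> Prop) (f : X -> R) : Prop :=
  forall U, R_open U -> opn (fun x => U (f x)).

Definition countable (D : Type) : Prop :=
  exists g : D -> nat, forall d1 d2, g d1 = g d2 -> d1 = d2.

Definition is_ideal {D : Type} (I : (D -> Prop) -> Prop) : Prop :=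
  (forall d0, I (fun d => d = d0)) /\
  (forall A B, I A -> (forall d, B d -> A d) -> I B) /\
  (I (fun _ => False)) /\
  (forall A B, I A -> I B -> I (fun d => A d \/ B d)).

Definition dual_filter {D : Type} (I : (D -> Prop) -> Prop) (A : D -> Prop) : Prop :=
  exists B, I B /\ forall d, A d <-> ~ B d.

Definition I_conv0 {D : Type} (I : (D -> Prop) -> Prop) (r : D -> R) : Prop :=
  forall eps, eps > 0 -> dual_filter I (fun d => Rabs (r d) < eps).

Definition I_conv0_fun {D X : Type} (I : (D -> Prop) -> Prop) (f : D -> X -> R) : Prop :=
  forall x, I_conv0 I (fun d => f d x).

(* {f_d}_{d in A} converges pointwise to 0: for each x and eps > 0,
   |f_d x| >= eps for only finitely many d in A. *)
Definition ptwise_conv0_on {D X : Type} (A : D -> Prop) (f : D -> X -> R) : Prop :=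
  forall x eps, eps > 0 ->
    exists l : list D, forall d, A d -> Rabs (f d x) >= eps -> In d l.

Definition I_convergence_property {X D : Type} (opn : (X -> Prop) -> Prop)
    (I : (D -> Prop) -> Prop) : Prop :=
  forall f : D -> X -> R,
    (forall d, continuous_on opn (f d)) -> I_conv0_fun I f ->
    exists A, dual_filter I A /\ ptwise_conv0_on A f.

(* Main.v *)
Require Import Defs.
From Stdlib Require Import Reals List.
From Stdlib Require Import Lra Lia ZArith Classical.
Open Scope R_scope.

Definition zval (y : R) (n : nat) : R := (IZR (up (y * 2 ^ n)) + / 2) / 2 ^ n.

Lemma zval_bounds y n : 0 < zval y n - y <= 2 / 2 ^ n.
Proof.
  unfold zval. set (p := 2 ^ n). assert (Hp : 0 < p) by (apply pow_lt; lra).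
  destruct (archimed (y * p)) as [H1 H2]. set (k := IZR (up (y * p))) in *.
  replace ((k + / 2) / p - y) with ((k - y * p + / 2) / p) by (field; lra).
  split.
  - apply Rdiv_lt_0_compat; lra.
  - unfold Rdiv. apply Rmult_le_compat_r. left; apply Rinv_0_lt_compat; lra. lra.
Qed.

Lemma odd_pow_eq (k j : Z) (a b : nat) :
  ((2 * k + 1) * 2 ^ Z.of_nat b = (2 * j + 1) * 2 ^ Z.of_nat a)%Z -> a = b.
Proof.
  revert k j b a.
  assert (Hgen : forall k j (a m : nat), ((2 * k + 1) * 2 ^ Z.of_nat (a + m) = (2 * j + 1) * 2 ^ Z.of_nat a)%Z -> m = 0%nat).
  { intros k j a m H. rewrite Nat2Z.inj_add, Z.pow_add_r in H by lia.
    assert (Ha : (2 ^ Z.of_nat a > 0)%Z) by (apply Z.lt_gt, Z.pow_pos_nonneg; lia).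
    assert (H' : ((2 * k + 1) * 2 ^ Z.of_nat m = 2 * j + 1)%Z).
    { apply (Z.mul_cancel_r _ _ (2 ^ Z.of_nat a)%Z). lia. rewrite <- H. ring. }
    destruct m as [|m]; [reflexivity|].
    rewrite Nat2Z.inj_succ, Z.pow_succ_r in H' by lia.
    exfalso. set (q := ((2 * k + 1) * 2 ^ Z.of_nat m)%Z) in *.
    assert (((2 * k + 1) * (2 * 2 ^ Z.of_nat m) = 2 * q)%Z) by (unfold q; ring). lia. }
  intros k j b a H. destruct (Nat.le_ge_cases a b) as [Hab|Hab].
  - replace b with (a + (b - a))%nat in H by lia. apply Hgen in H. lia.
  - replace a with (b + (a - b))%nat in H by lia. symmetry in H. apply Hgen in H. lia.
Qed.

Lemma zval_inj y1 y2 n1 n2 : zval y1 n1 = zval y2 n2 -> n1 = n2.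
Proof.
  unfold zval. intro H.
  set (k1 := up (y1 * 2 ^ n1)) in *. set (k2 := up (y2 * 2 ^ n2)) in *.
  assert (P1 : 0 < 2 ^ n1) by (apply pow_lt; lra).
  assert (P2 : 0 < 2 ^ n2) by (apply pow_lt; lra).
  assert (E : IZR ((2 * k1 + 1) * 2 ^ Z.of_nat n2) = IZR ((2 * k2 + 1) * 2 ^ Z.of_nat n1)).
  { rewrite !mult_IZR, <- !pow_IZR, !plus_IZR, !mult_IZR.
    apply (Rmult_eq_reg_r (/ (2 * 2 ^ n1 * 2 ^ n2))).
    2: { apply Rinv_neq_0_compat. apply Rgt_not_eq. apply Rmult_lt_0_compat; try lra. }
    replace (IZR 2) with 2 by reflexivity.
    replace ((2 * IZR k1 + 1) * 2 ^ n2 * / (2 * 2 ^ n1 * 2 ^ n2)) with ((IZR k1 + /2) / 2 ^ n1) by (field; lra).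
    rewrite H. field; lra. }
  apply eq_IZR in E. exact (odd_pow_eq _ _ _ _ E).
Qed.

Lemma ideal_idx {D : Type} (I : (D -> Prop) -> Prop) (g : D -> nat) :
  is_ideal I -> (forall d1 d2, g d1 = g d2 -> d1 = d2) ->
  forall N, I (fun d => (g d <= N)%nat).
Proof.
  intros [Hs [Hsub [H0 Hu]]] Hg.
  assert (Heq : forall m, I (fun d => g d = m)).
  { intro m. destruct (classic (exists d0, g d0 = m)) as [[d0 Hd0]|Hn].
    - apply (Hsub _ _ (Hs d0)). intros d Hd. apply Hg. congruence.
    - apply (Hsub _ _ H0). intros d Hd. apply Hn. eauto. }
  induction N.
  - apply (Hsub _ _ (Heq 0%nat)). intros d Hd. lia.
  - apply (Hsub _ _ (Hu _ _ IHN (Heq (S N)))). intros d Hd. lia.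
Qed.

Lemma list_idx {D : Type} (g : D -> nat) :
  (forall d1 d2, g d1 = g d2 -> d1 = d2) ->
  forall N, exists l : list D, forall d, (g d <= N)%nat -> In d l.
Proof.
  intros Hg.
  assert (Heq : forall m, exists l : list D, forall d, g d = m -> In d l).
  { intro m. destruct (classic (exists d0, g d0 = m)) as [[d0 Hd0]|Hn].
    - exists (d0 :: nil). intros d Hd. left. apply Hg. congruence.
    - exists nil. intros d Hd. apply Hn. eauto. }
  induction N.
  - destruct (Heq 0%nat) as [l Hl]. exists l. intros d Hd. apply Hl. lia.
  - destruct IHN as [l1 Hl1]. destruct (Heq (S N)) as [l2 Hl2].
    exists (l1 ++ l2). intros d Hd. apply in_or_app.
    destruct (Nat.eq_dec (g d) (S N)); [right; auto | left; apply Hl1; lia].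
Qed.

Theorem mainTheorem13 (X : Type) (opn : (X -> Prop) -> Prop) (D : Type)
  (I : (D -> Prop) -> Prop)
  (Htop : is_topology opn) (Hcount : countable D) (Hideal : is_ideal I)
  (Hdistinct : forall f : D -> X -> R,
      (forall d1 d2, f d1 = f d2 -> d1 = d2) ->
      (forall d, continuous_on opn (f d)) -> I_conv0_fun I f ->
      exists A, dual_filter I A /\ ptwise_conv0_on A f) :
  I_convergence_property opn I.
Proof.
  intros f Hc Hconv.
  destruct (classic (exists x : X, True)) as [[x0 _]|Hne].
  2: { exists (fun _ => True). split.
       - exists (fun _ => False). split; [apply Hideal | tauto].
       - intros x. exfalso. apply Hne. eauto. }
  destruct Hcount as [g Hg].
  set (c := fun d => zval (f d x0) (g d) - f d x0).
  set (h := fun d x => f d x + c d).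
  assert (Hcb : forall d, 0 < c d <= 2 / 2 ^ (g d)) by (intro d; apply zval_bounds).
  assert (key : forall eps, eps > 0 -> exists N, forall d, c d >= eps -> (g d <= N)%nat).
  { intros eps Heps. destruct (Pow_x_infinity 2 ltac:(rewrite Rabs_pos_eq; lra) (4 / eps)) as [N HN].
    exists N. intros d Hd. destruct (Nat.le_gt_cases (g d) N) as [|Hlt]; [assumption|].
    exfalso. specialize (HN (g d) ltac:(lia)).
    assert (Pp : 0 < 2 ^ g d) by (apply pow_lt; lra).
    rewrite Rabs_pos_eq in HN by lra.
    assert (Hpe : 2 ^ g d * eps >= 4).
    { replace 4 with (4 / eps * eps) by (field; lra). apply Rle_ge, Rmult_le_compat_r; lra. }
    destruct (Hcb d) as [_ Hc2].
    assert (2 / 2 ^ g d * 2 ^ g d = 2) by (field; lra).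
    assert (c d * 2 ^ g d <= 2).
    { eapply Rle_trans. apply Rmult_le_compat_r. lra. exact Hc2. lra. }
    nra. }
  assert (Hhdist : forall d1 d2, h d1 = h d2 -> d1 = d2).
  { intros d1 d2 E. apply Hg. apply (zval_inj (f d1 x0) (f d2 x0)).
    assert (E' := f_equal (fun k => k x0) E). unfold h, c in E'. simpl in E'. lra. }
  assert (Hhc : forall d, continuous_on opn (h d)).
  { intros d U HU. apply (Hc d (fun y => U (y + c d))).
    intros y Hy. destruct (HU _ Hy) as [eps [He Hz]]. exists eps. split; auto.
    intros z Hzy. apply Hz. replace (z + c d - (y + c d)) with (z - y) by ring. auto. }
  assert (Hhconv : I_conv0_fun I h).
  { intros x eps Heps. destruct (Hconv x (eps / 2) ltac:(lra)) as [B [HB HBiff]].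
    destruct (key (eps / 2) ltac:(lra)) as [N HN].
    exists (fun d => ~ Rabs (h d x) < eps). split.
    - pose proof (ideal_idx I g Hideal Hg N) as HIN.
      destruct Hideal as [_ [Hsub [_ Hu]]].
      apply (Hsub _ _ (Hu _ _ HB HIN)).
      intros d Hd. apply NNPP. intros Hn. apply Hd.
      assert (Hf : Rabs (f d x) < eps / 2) by (apply HBiff; tauto).
      assert (Hcd : c d < eps / 2).
      { destruct (Rlt_or_le (c d) (eps / 2)) as [|Hle]; auto. exfalso. apply Hn. right. apply HN. lra. }
      unfold h. eapply Rle_lt_trans. apply Rabs_triang.
      rewrite (Rabs_pos_eq (c d)) by (destruct (Hcb d); lra). lra.
    - intros d. split; [tauto|]. intros Hn. apply NNPP. exact Hn. }
  destruct (Hdistinct h Hhdist Hhc Hhconv) as [A [HA Hpt]].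
  exists A. split; auto.
  intros x eps Heps. destruct (Hpt x (eps / 2) ltac:(lra)) as [l1 Hl1].
  destruct (key (eps / 2) ltac:(lra)) as [N HN].
  destruct (list_idx g Hg N) as [l2 Hl2].
  exists (l1 ++ l2). intros d Ad Hf. apply in_or_app.
  destruct (Rlt_or_le (c d) (eps / 2)) as [Hlt|Hle].
  - left. apply Hl1; auto.
    assert (Rabs (f d x) <= Rabs (h d x) + Rabs (- c d)).
    { replace (f d x) with (h d x + - c d) by (unfold h; ring). apply Rabs_triang. }
    rewrite Rabs_Ropp, (Rabs_pos_eq (c d)) in H by (destruct (Hcb d); lra). lra.
  - right. apply Hl2. apply HN. lra.
Qed.
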